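(* For every state $x$ and every round $t\ge1$, \[ \sum_{i\in V}\frac{\operatorname{Var}[W_i(X^t)\mid X^{t-1}=x]}{s_i} \le \sum_{(i,j)} f_{ij}(x)\left(\frac{1}{s_i}+\frac{1}{s_j}\right), \] where the sum on the right runs over all ordered pairs $(i,j)$ of adjacent processors with $\ell_i(x)-\ell_j(x)>1/s_j$, and $f_{ij}(x)=\frac{\ell_i(x)-\ell_j(x)}{\alpha\, d_{ij}\,(1/s_i+1/s_j)}$.
   Context: $G=(V,E)$ is an undirected graph (processors as vertices); $\deg(i)$ is the degree and $d_{ij}=\max\{\deg(i),\deg(j)\}$. Processor $i$ has speed $s_i>0$; $s_{\max}=\max_i s_i$; $\alpha=4s_{\max}$. Task $\ell$ has weight $w_\ell\in(0,1]$. In state $x$, $W_i(x)$ is the total weight on processor $i$ and $\ell_i(x)=W_i(x)/s_i$. Protocol: in each round every task, independently, with $i$ its current processor, chooses a uniformly random neighbor $j$; if $\ell_i-\ell_j>1/s_j$ it moves to $j$ with probability $\frac{\deg(i)}{d_{ij}}\cdot\frac{\ell_i-\ell_j}{\alpha(1/s_i+1/s_j)W_i}$, otherwise stays. $X^t$ is the state after $t$ rounds. *)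

(* Defs.v *)
From mathcomp Require Import all_boot all_order all_algebra.
Set Implicit Arguments. Unset Strict Implicit. Unset Printing Implicit Defensive.
Import Order.TTheory GRing.Theory Num.Theory.
Local Open Scope ring_scope.

Section Protocol.
Variables (R : realFieldType) (V T : finType).
Variable e : rel V.
Variables (s : V -> R) (w : T -> R).

Definition state := {ffun T -> V}.

Definition deg (i : V) : nat := #|[set j | e i j]|.
Definition dmax (i j : V) : nat := maxn (deg i) (deg j).

Definition smax : R := \big[Num.max/0]_(i : V) s i.
Definition alpha : R := 4 * smax.

Definition load (x : state) (i : V) : R := \sum_(l : T | x l == i) w l.
Definition ell (x : state) (i : V) : R := load x i / s i.

(* probability that a task on i, having chosen neighbour j, moves to j *)
Definition move_prob (x : state) (i j : V) : R :=
  if 1 / s j < ell x i - ell x j then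
    (deg i)%:R / (dmax i j)%:R *
      ((ell x i - ell x j) / (alpha * (1 / s i + 1 / s j) * load x i))
  else 0.

(* one-round law of the new position of task l, from state x:
   the neighbour j is chosen uniformly (prob 1/deg i), then moves w.p. move_prob *)
Definition step_prob (x : state) (l : T) (j : V) : R :=
  let i := x l in
  if j == i then 1 - \sum_(k : V | e i k) (deg i)%:R^-1 * move_prob x i k
  else if e i j then (deg i)%:R^-1 * move_prob x i j else 0.

(* tasks act independently: product transition kernel P[X^t = y | X^{t-1} = x] *)
Definition kernel (x y : state) : R := \prod_(l : T) step_prob x l (y l).

Fixpoint law (mu : state -> R) (t : nat) (y : state) : R :=
  match t with
  | 0 => mu y
  | t'.+1 => \sum_(x : state) law mu t' x * kernel x y
  end.

(* E[f(X^t) | X^{t-1} = x], using the joint law P[X^{t-1}=x, X^t=y] *)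
Definition cond_exp (mu : state -> R) (t : nat) (x : state) (f : state -> R) : R :=
  (\sum_(y : state) law mu t.-1 x * kernel x y * f y) / law mu t.-1 x.

Definition cond_var (mu : state -> R) (t : nat) (x : state) (i : V) : R :=
  cond_exp mu t x (fun y => load y i ^+ 2) - (cond_exp mu t x (fun y => load y i)) ^+ 2.

Definition flow (x : state) (i j : V) : R :=
  (ell x i - ell x j) / (alpha * (dmax i j)%:R * (1 / s i + 1 / s j)).

End Protocol.

(* Main.v *)
Require Import Defs.
From mathcomp Require Import all_boot all_order all_algebra.
From mathcomp Require Import ring lra.
Import Order.TTheory GRing.Theory Num.Theory.
Local Open Scope ring_scope.

Section Gen.
Variables (R : realFieldType) (V T : finType).

Lemma prod_if1 (a : T -> R) m : \prod_l (if l == m then a l else 1) = a m.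
Proof. by rewrite (bigD1 m) //= eqxx big1 ?mulr1 // => l /negbTE ->. Qed.

Lemma sum_ind (F : V -> R) i : \sum_j F j * (j == i)%:R = F i.
Proof.
by rewrite (bigD1 i) //= eqxx mulr1 big1 ?addr0 // => j /negbTE ->; rewrite mulr0.
Qed.

Lemma distr (F G : T -> V -> R) :
  \sum_(y : {ffun T -> V}) (\prod_l F l (y l)) * (\prod_l G l (y l)) =
  \prod_l \sum_j F l j * G l j.
Proof. by rewrite bigA_distr_bigA; apply: eq_bigr => y _; rewrite big_split. Qed.

Variable F : T -> V -> R.
Hypothesis Fsum : forall l, \sum_j F l j = 1.

Lemma marg1 m i :
  \sum_(y : {ffun T -> V}) (\prod_l F l (y l)) * (y m == i)%:R = F m i.
Proof.
transitivity (\sum_(y : {ffun T -> V}) (\prod_l F l (y l)) *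
   \prod_l (if l == m then (y l == i)%:R else 1)).
  by apply: eq_bigr => y _; rewrite (prod_if1 (fun l => (y l == i)%:R)).
rewrite (distr F (fun l j => if l == m then (j == i)%:R else 1)).
rewrite -(prod_if1 (fun l => F l i) m); apply: eq_bigr => l _.
case: (l == m); first by rewrite sum_ind.
by under eq_bigr do rewrite mulr1; rewrite Fsum.
Qed.

Lemma marg2 m n i :
  \sum_(y : {ffun T -> V}) (\prod_l F l (y l)) * ((y m == i)%:R * (y n == i)%:R)
  = F m i * F n i + (m == n)%:R * (F m i - F m i ^+ 2).
Proof.
have [<-|mn] := eqVneq m n.
  rewrite mul1r addrC -expr2 subrK.
  under eq_bigr do rewrite -natrM mulnb andbb.
  by rewrite marg1.
rewrite mul0r addr0.
transitivity (\sum_(y : {ffun T -> V}) (\prod_l F l (y l)) *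
   \prod_l ((if l == m then (y l == i)%:R else 1) * (if l == n then (y l == i)%:R else 1))).
  apply: eq_bigr => y _; rewrite big_split /=.
  by rewrite (prod_if1 (fun l => (y l == i)%:R)) (prod_if1 (fun l => (y l == i)%:R)).
rewrite (distr F (fun l j => (if l == m then (j == i)%:R else 1) * (if l == n then (j == i)%:R else 1))).
rewrite -(prod_if1 (fun l => F l i) m) -(prod_if1 (fun l => F l i) n) -big_split /=.
apply: eq_bigr => l _.
have [lm|lm] := eqVneq l m.
  have ln : (l == n) = false by apply/negbTE; rewrite lm.
  by rewrite ln; under eq_bigr do rewrite mulr1; rewrite sum_ind mulr1.
case: (l == n).
  by rewrite mul1r; under eq_bigr do rewrite mul1r; rewrite sum_ind.
by rewrite mulr1; under eq_bigr do rewrite !mulr1; rewrite Fsum.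
Qed.

End Gen.
Lemma aux1 (R : realFieldType) (a : R) : a - a ^+ 2 <= 1 - a.
Proof. rewrite -subr_ge0 (_ : _ - _ = (1 - a) ^+ 2) ?sqr_ge0 //; ring. Qed.
Lemma aux2 (R : realFieldType) (a : R) : a - a ^+ 2 <= a.
Proof. by rewrite lerBlDr lerDl sqr_ge0. Qed.
Lemma aux3 (R : realFieldType) (a : R) : 0 < a -> a <= 1 -> a * a <= a. Proof. nra. Qed.

Theorem lemma34 (R : realFieldType) (V T : finType) (e : rel V)
  (e_sym : symmetric e) (e_irr : irreflexive e)
  (s : V -> R) (s_pos : forall i, 0 < s i)
  (w : T -> R) (w_range : forall l, 0 < w l <= 1)
  (mu : state V T -> R) (mu_ge0 : forall x, 0 <= mu x) (mu_sum : \sum_x mu x = 1)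
  (x : state V T) (t : nat) (t_ge1 : (1 <= t)%N)
  (hx : 0 < law e s w mu t.-1 x) :
  \sum_(i : V) cond_var e s w mu t x i / s i <=
  \sum_(i : V) \sum_(j : V | e i j && (1 / s j < ell s w x i - ell s w x j))
     flow e s w x i j * (1 / s i + 1 / s j).
Proof.
set p := step_prob e s w x.
set q := fun k j => (deg e k)%:R^-1 * move_prob e s w x k j.
set B := fun k => \sum_(j | e k j) q k j * (1 / s k + 1 / s j).
have pE : forall l j, p l j = if j == x l then 1 - \sum_(k | e (x l) k) q (x l) k
     else if e (x l) j then q (x l) j else 0 by [].
have psum : forall l, \sum_j p l j = 1.
  move=> l; rewrite (bigD1 (x l)) //= pE eqxx.
  rewrite [X in _ + X = _](_ : _ = \sum_(k | e (x l) k) q (x l) k) ?subrK //.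
  rewrite big_mkcond [RHS]big_mkcond /=; apply: eq_bigr => j _.
  rewrite pE; case: eqVneq => [->|]; last by [].
  by rewrite e_irr.
have ce : forall f, cond_exp e s w mu t x f = \sum_(y : state V T) (\prod_l p l (y l)) * f y.
  move=> f; rewrite /cond_exp.
  under eq_bigr do rewrite -mulrA.
  rewrite -mulr_sumr mulrAC divff ?mul1r //; first by rewrite gt_eqF.
have loadE : forall (y : state V T) (i : V), load w y i = \sum_m w m * (y m == i)%:R.
  move=> y i; rewrite /load big_mkcond /=; apply: eq_bigr => m _.
  by case: (y m == i); rewrite ?mulr1 ?mulr0.
have varE : forall i, cond_var e s w mu t x i = \sum_m w m ^+ 2 * (p m i - p m i ^+ 2).
  move=> i; rewrite /cond_var !ce.
  have E1 : \sum_(y : state V T) (\prod_l p l (y l)) * load w y i = \sum_m w m * p m i.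
    under eq_bigr do rewrite loadE mulr_sumr.
    rewrite exchange_big /=; apply: eq_bigr => m _.
    under eq_bigr do rewrite mulrCA.
    by rewrite -mulr_sumr marg1.
  have E2 : \sum_(y : state V T) (\prod_l p l (y l)) * load w y i ^+ 2 =
      \sum_m \sum_n w m * w n * (p m i * p n i + (m == n)%:R * (p m i - p m i ^+ 2)).
    under eq_bigr do rewrite expr2 loadE mulr_suml mulr_sumr.
    rewrite exchange_big /=; apply: eq_bigr => m _.
    under eq_bigr do rewrite !mulr_sumr.
    rewrite exchange_big /=; apply: eq_bigr => n _.
    transitivity (\sum_(y : state V T) w m * w n * (\prod_l p l (y l) * ((y m == i)%:R * (y n == i)%:R))).
      by apply: eq_bigr => y _; ring.
    by rewrite -mulr_sumr marg2.
  rewrite E1 E2 expr2 mulr_suml -sumrB; apply: eq_bigr => m _.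
  rewrite mulr_sumr -sumrB (bigD1 m) //= eqxx big1 ?addr0.
    by rewrite mul1r; ring.
  move=> n /negbTE; rewrite eq_sym => ->; rewrite mul0r addr0; ring.
have smaxge : forall i, s i <= smax s.
  by move=> i; rewrite /smax (bigD1 i) //= le_max lexx.
have alpha_gt0 : forall i : V, 0 < alpha s.
  move=> i; rewrite /alpha mulr_gt0 //; exact: lt_le_trans (s_pos i) (smaxge i).
have load_ge0 : forall i, 0 <= load w x i.
  by move=> i; apply: sumr_ge0 => l _; case/andP: (w_range l) => /ltW.
have ell_ge0 : forall i, 0 <= ell s w x i.
  by move=> i; rewrite /ell divr_ge0 // ltW.
have qge0 : forall k j, 0 <= q k j.
  move=> k j; rewrite /q mulr_ge0 ?invr_ge0 ?ler0n //.
  rewrite /move_prob; case: ifP => // cond.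
  have hsj : 0 < 1 / s j by rewrite divr_gt0.
  have sk : 0 < 1 / s k by rewrite divr_gt0.
  have hd : 0 <= ell s w x k - ell s w x j by apply: ltW; exact: lt_trans cond.
  have hW := load_ge0 k.
  have ha := alpha_gt0 k.
  have hS : 0 <= 1 / s k + 1 / s j by apply: ltW; rewrite addr_gt0.
  apply: mulr_ge0; first by rewrite divr_ge0 ?ler0n.
  by apply: divr_ge0 => //; apply: mulr_ge0 => //; apply: mulr_ge0 => //; exact: ltW.
have Bge0 : forall k, 0 <= B k.
  move=> k; apply: sumr_ge0 => j _; apply: mulr_ge0; first exact: qge0.
  by apply: addr_ge0; apply: divr_ge0 => //; apply: ltW.
have rhsE : \sum_(i : V) \sum_(j : V | e i j && (1 / s j < ell s w x i - ell s w x j))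
     flow e s w x i j * (1 / s i + 1 / s j) = \sum_m w m * B (x m).
  transitivity (\sum_i load w x i * B i).
    apply: eq_bigr => i _; rewrite big_mkcondr /= /B mulr_sumr; apply: eq_bigr => j eij.
    case: ifP => cond; last by rewrite /q /move_prob cond mulr0 mul0r mulr0.
    rewrite mulrA; congr (_ * _).
    have hsj : 0 < 1 / s j by rewrite divr_gt0.
    have hsi : 0 < 1 / s i by rewrite divr_gt0.
    have lip : 0 < ell s w x i.
      apply: le_lt_trans (ell_ge0 j) _; rewrite -subr_gt0; exact: lt_trans hsj cond.
    have hW : load w x i != 0.
      apply/negP => /eqP h0; move: lip; by rewrite /ell h0 mul0r ltxx.
    have hdeg : (0 < deg e i)%N by apply/card_gt0P; exists j; rewrite inE.
    have hdm : (0 < dmax e i j)%N by rewrite /dmax leq_max hdeg.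
    have hdeg' : (deg e i)%:R != 0 :> R by rewrite pnatr_eq0 -lt0n.
    have hdm' : (dmax e i j)%:R != 0 :> R by rewrite pnatr_eq0 -lt0n.
    have hal : alpha s != 0 by rewrite gt_eqF // (alpha_gt0 i).
    have hS : 1 / s i + 1 / s j != 0 by rewrite gt_eqF // addr_gt0.
    rewrite /q /move_prob cond /flow.
    field.
    have si := s_pos i; have sj := s_pos j.
    by rewrite hW hal hdm' hdeg' !gt_eqF ?addr_gt0.
  rewrite /load; under eq_bigr do rewrite mulr_suml big_mkcond.
  rewrite exchange_big /=; apply: eq_bigr => l _.
  by rewrite (bigD1 (x l)) //= eqxx big1 ?addr0 // => i /negbTE; rewrite eq_sym => ->.
have lhsE : \sum_(i : V) cond_var e s w mu t x i / s i =
    \sum_m w m ^+ 2 * \sum_i (p m i - p m i ^+ 2) / s i.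
  under eq_bigr do rewrite varE mulr_suml.
  rewrite exchange_big /=; apply: eq_bigr => m _.
  by under eq_bigr do rewrite -mulrA; rewrite -mulr_sumr.
rewrite lhsE rhsE; apply: ler_sum => m _.
have X : \sum_i (p m i - p m i ^+ 2) / s i <= B (x m).
  apply: (le_trans (y := \sum_i (if i == x m then 1 - p m i else p m i) / s i)).
    apply: ler_sum => i _; apply: ler_wpM2r; first by rewrite invr_ge0 ltW.
    by case: ifP => _; rewrite ?aux1 ?aux2.
  rewrite (bigD1 (x m)) //= eqxx pE eqxx.
  rewrite le_eqVlt; apply/orP; left; apply/eqP.
  rewrite /B; under [RHS]eq_bigr do rewrite mulrDr; rewrite big_split /= -mulr_suml.
  congr (_ + _); first by rewrite div1r; ring.
  rewrite big_mkcond [RHS]big_mkcond /=; apply: eq_bigr => i _.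
  rewrite pE; case: eqVneq => [->|_]; first by rewrite e_irr.
  by case: (e (x m) i); rewrite ?div1r ?mul0r.
have wm := w_range m; case/andP: wm => w0 w1.
apply: (le_trans (y := w m ^+ 2 * B (x m))).
  by apply: ler_wpM2l; rewrite ?sqr_ge0.
apply: ler_wpM2r; first exact: Bge0.
by rewrite expr2 aux3.
Qed.
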